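(* Let $k$ be a positive integer. A graph $G$ is not b-$\chi$-$k$-bounded if and only if $G$ contains, as an induced subgraph, a minimal $\chi$-$k$-unbounded b-atom.
   Context: $\chi(G)$ denotes the chromatic number. A proper $k$-coloring of $G$ is a surjective map $c:V(G)\to\{1,\ldots,k\}$ with $c(u)\ne c(v)$ for every edge $uv$; a vertex of color $i$ is a b-vertex if it has a neighbor of every color $j\ne i$; a b-$k$-coloring is a proper $k$-coloring in which every color class contains a b-vertex; $\varphi(G)$ is the largest $k$ such that $G$ has a b-$k$-coloring. A b-$t$-atom is a graph $A$ whose vertex set can be partitioned into $t$ sets $D_1,\ldots,D_t$, each $D_i$ containing a special vertex $c_i$, such that each $D_i$ is independent with $|D_i|\le t$ and, for all $i\ne j$, $c_i$ has a neighbor in $D_j$. A graph $G$ is b-$\chi$-$k$-bounded if $\varphi(G')-\chi(G')\le k$ for every induced subgraph $G'$ of $G$. A graph $G$ is a $\chi$-$k$-unbounded b-atom if $\varphi(G)-\chi(G)>k$ and $G$ is a b-$t$-atom for some integer $t$; it is minimal if no proper induced subgraph of it is a $\chi$-$k$-unbounded b-atom. *)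

(* Defs.v *)
(* A finite simple graph is a symmetric irreflexive relation
   e on a finite vertex type V; an induced subgraph is given by a vertex set
   S : {set V} (the graph induced by e on S). *)
From mathcomp Require Import all_boot.
Set Implicit Arguments. Unset Strict Implicit. Unset Printing Implicit Defensive.

Section Graphs.
Variables (V : finType) (e : rel V).

Definition proper_coloring (S : {set V}) (k : nat) (c : V -> nat) : Prop :=
  [/\ (forall x, x \in S -> c x < k),
      (forall i, i < k -> exists2 x, x \in S & c x = i) &
      (forall x y, x \in S -> y \in S -> e x y -> c x <> c y)].

Definition b_vertex (S : {set V}) (k : nat) (c : V -> nat) (x : V) : Prop :=
  x \in S /\
  forall j, j < k -> j <> c x -> exists2 y, y \in S & e x y /\ c y = j.

Definition b_coloring (S : {set V}) (k : nat) (c : V -> nat) : Prop :=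
  proper_coloring S k c /\
  forall i, i < k -> exists2 x, b_vertex S k c x & c x = i.

Definition is_chromatic_number (S : {set V}) (n : nat) : Prop :=
  (exists c, proper_coloring S n c) /\
  forall m c, proper_coloring S m c -> n <= m.

Definition is_b_chromatic_number (S : {set V}) (n : nat) : Prop :=
  (exists c, b_coloring S n c) /\
  forall m c, b_coloring S m c -> m <= n.

Definition chi_k_unbounded (k : nat) (S : {set V}) : Prop :=
  exists p q, [/\ is_b_chromatic_number S p, is_chromatic_number S q & q + k < p].

Definition b_chi_bounded (k : nat) (S : {set V}) : Prop :=
  forall S' : {set V}, S' \subset S -> ~ chi_k_unbounded k S'.

(* G[S] is a b-t-atom: D_i = {x in S | d x = i}, special vertices cs i. *)
Definition b_atom (t : nat) (S : {set V}) : Prop :=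
  exists (d : V -> nat) (cs : nat -> V),
  [/\ (forall x, x \in S -> d x < t),
      (forall i, i < t -> cs i \in S /\ d (cs i) = i),
      (forall x y, x \in S -> y \in S -> d x = d y -> ~~ e x y),
      (forall i, i < t -> #|[set x in S | d x == i]| <= t) &
      (forall i j, i < t -> j < t -> i <> j ->
         exists2 y, y \in S & d y = j /\ e (cs i) y)].

Definition unbounded_b_atom (k : nat) (S : {set V}) : Prop :=
  chi_k_unbounded k S /\ exists t, b_atom t S.

Definition minimal_unbounded_b_atom (k : nat) (S : {set V}) : Prop :=
  unbounded_b_atom k S /\ forall S' : {set V}, S' \proper S -> ~ unbounded_b_atom k S'.

End Graphs.

(* Main.v *)
From Stdlib Require Import Classical.
Require Import Defs.
From mathcomp Require Import all_boot.
From mathcomp Require Import zify.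

Lemma ex_min_nat (P : nat -> Prop) n : P n -> exists m, P m /\ forall j, P j -> m <= j.
Proof.
elim: n {-2}n (leqnn n) => [|N IH] n hn Pn.
  exists n; split => // j _; move: hn; rewrite leqn0 => /eqP ->; done.
case: (classic (exists j, j < n /\ P j)) => [[j [hj Pj]]|hno].
  apply: (IH j) => //; lia.
exists n; split => // j Pj; rewrite leqNgt; apply/negP => hj; apply: hno; by exists j.
Qed.

Lemma ex_max_nat (P : nat -> Prop) n N : P n -> (forall j, P j -> j <= N) ->
  exists m, P m /\ forall j, P j -> j <= m.
Proof.
move=> Pn hb.
have [j0 [[h1 h2] hmin]] := @ex_min_nat (fun j => j <= N /\ P (N - j)) (N - n)
  (conj (leq_subr _ _) (eq_ind_r P Pn (subKn (hb n Pn)))).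
exists (N - j0); split => // j Pj.
have := hmin (N - j) (conj (leq_subr _ _) (eq_ind_r P Pj (subKn (hb j Pj)))).
have := hb j Pj. lia.
Qed.

Section S.
Variables (V : finType) (e : rel V).

Lemma compress (S : {set V}) n c : (forall x, x \in S -> c x < n) ->
  (forall x y, x \in S -> y \in S -> e x y -> c x <> c y) ->
  exists m c', m <= n /\ proper_coloring e S m c'.
Proof.
elim: n c => [|n IH] c hr hp.
  exists 0, c; split => //; split => //.
case: (boolP [forall i : 'I_n.+1, [exists x in S, c x == i]]) => hall.
  exists n.+1, c; split => //; split; [exact: hr | move=> i hi | exact: hp].
  move/forallP: hall => /(_ (Ordinal hi)) /existsP [x /andP [hx /eqP hcx]]; by exists x.
move/forallPn: hall => [i0 /existsPn hi0].
have hne : forall x, x \in S -> c x <> i0.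
  move=> x hx; have := hi0 x; rewrite hx /= => /eqP; done.
pose c' x := if i0 < c x then (c x).-1 else c x.
have H1 : forall x, x \in S -> c' x < n.
  move=> x hx; rewrite /c'; have := hr x hx; have := hne x hx; have := ltn_ord i0.
  case: ifP => h; lia.
have H2 : forall x y, x \in S -> y \in S -> e x y -> c' x <> c' y.
  move=> x y hx hy hxy; have := hp x y hx hy hxy; rewrite /c'.
  have := hne x hx; have := hne y hy.
  case: ifP => h1; case: ifP => h2; lia.
have [m [c'' [hm hpc]]] := IH c' H1 H2.
exists m, c''; split => //; lia.
Qed.

Lemma chi_exists (S : {set V}) n c : proper_coloring e S n c -> exists q, is_chromatic_number e S q.
Proof.
move=> hc.
have [q [[c1 h1] hmin]] := @ex_min_nat (fun m => exists c, proper_coloring e S m c) n (ex_intro _ c hc).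
exists q; split; first by exists c1.
move=> m c2 h2; exact: hmin m (ex_intro _ c2 h2).
Qed.

Lemma bcol_bound (S : {set V}) m c : b_coloring e S m c -> m <= #|S|.
Proof.
move=> [[hr hs hp] _].
rewrite -(size_iota 0 m) cardE -(size_map c).
apply: uniq_leq_size; first exact: iota_uniq.
move=> i; rewrite mem_iota add0n => /andP [_ hi].
have [x hx <-] := hs i hi. apply: map_f; by rewrite mem_enum.
Qed.

Lemma phi_exists (S : {set V}) n c : b_coloring e S n c ->
  exists p, is_b_chromatic_number e S p /\ n <= p.
Proof.
move=> hc.
have [p [[c1 h1] hmax]] := @ex_max_nat (fun m => exists c, b_coloring e S m c) n #|S|
  (ex_intro _ c hc) (fun j '(ex_intro c2 h2) => @bcol_bound S j c2 h2).
exists p; split; last exact: hmax n (ex_intro _ c hc).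
split; first by exists c1.
move=> m c2 h2; exact: hmax m (ex_intro _ c2 h2).
Qed.

End S.
Arguments chi_exists {V e S n c}.
Arguments phi_exists {V e S n c}.

Theorem mainTheorem16 (V : finType) (e : rel V)
  (e_sym : symmetric e) (e_irr : irreflexive e) (k : nat) (k_pos : 0 < k) :
  ~ b_chi_bounded e k [set: V] <->
  exists S : {set V}, minimal_unbounded_b_atom e k S.
Proof.
split; last first.
  move=> [S [[hu _] _]] hb; exact: (hb S (subsetT S) hu).
move=> hnb.
have [S' hS'] : exists S', chi_k_unbounded e k S'.
  apply: NNPP => hno; apply: hnb => S' _ hu; apply: hno; by exists S'.
have [H hH] : exists H, unbounded_b_atom e k H.
  move: hS' => [p [q [[[c hc] _] [[c' hc'] _] hpq]]].
  have p0 : 0 < p by lia.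
  move: (hc) => [[hr hs hp] hbv].
  have [x0 [hx0 _] _] := hbv 0 p0.
  pose isb x := (x \in S') && [forall j : 'I_p, (val j != c x) ==>
                    [exists y in S', e x y && (c y == j)]].
  pose cs (i : nat) := odflt x0 [pick x | isb x && (c x == i)].
  have hcs : forall i, i < p -> isb (cs i) /\ c (cs i) = i.
    move=> i hi; rewrite /cs; case: pickP => [x /andP [h1 /eqP h2] | hn] //=.
    have [x [hxS hx] hcx] := hbv i hi.
    have := hn x; rewrite hcx eqxx andbT => /negP []; rewrite /isb hxS /=.
    apply/forallP => j; apply/implyP => /eqP hne.
    have [y hy [hxy hcy]] := hx j (ltn_ord j) hne.
    apply/existsP; exists y; by rewrite hy hxy hcy eqxx.
  pose nb (i j : nat) := odflt x0 [pick y in S' | e (cs i) y && (c y == j)].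
  have hnbr : forall i j, i < p -> j < p -> j <> i ->
      [/\ nb i j \in S', e (cs i) (nb i j) & c (nb i j) = j].
    move=> i j hi hj hji; rewrite /nb; case: pickP => [y /andP [h1 /andP [h2 /eqP h3]] | hn] //=.
    have [/andP [_ /forallP hf] hci] := hcs i hi.
    have := hf (Ordinal hj); rewrite /= hci; move/eqP: hji => -> /= /existsP [y /andP [hy hy2]].
    by have := hn y; rewrite hy hy2.
  pose H := [set x | [exists i : 'I_p, (x == cs i) ||
                [exists j : 'I_p, (val j != val i) && (x == nb i j)]]].
  have csH : forall i, i < p -> cs i \in H.
    move=> i hi; rewrite inE; apply/existsP; exists (Ordinal hi); by rewrite eqxx.
  have nbH : forall i j, i < p -> j < p -> j <> i -> nb i j \in H.
    move=> i j hi hj hji; rewrite inE; apply/existsP; exists (Ordinal hi).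
    apply/orP; right; apply/existsP; exists (Ordinal hj); rewrite eqxx andbT /=.
    by apply/eqP.
  have HS : H \subset S'.
    apply/subsetP => x; rewrite inE => /existsP [i /orP [/eqP -> | /existsP [j /andP [hj /eqP ->]]]].
      by have [/andP [] ] := hcs i (ltn_ord i).
    have [] // := hnbr i j (ltn_ord i) (ltn_ord j); by apply/eqP.
  have hHS : forall x, x \in H -> x \in S' by move=> x; apply: (subsetP HS).
  exists H; split.
  - have hbH : b_coloring e H p c.
      split.
        split.
        + by move=> x /hHS /hr.
        + move=> i hi; exists (cs i); [exact: csH | by case: (hcs i hi)].
        + by move=> x y /hHS hx /hHS hy; apply: hp.
      move=> i hi; exists (cs i); last by case: (hcs i hi).
      split; first exact: csH.
      move=> j hj; have [_ ->] := hcs i hi => hji.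
      have [h1 h2 h3] := hnbr i j hi hj hji.
      exists (nb i j); [exact: nbH | by split].
    have [pH [hpH hle]] := phi_exists hbH.
    move: hc' => [hr' hs' hp'].
    have [m [c2 [hm hc2]]] := @compress V e H q c' (fun x hx => hr' x (hHS x hx))
      (fun x y hx hy => hp' x y (hHS x hx) (hHS y hy)).
    have [qH hqH] := chi_exists hc2.
    exists pH, qH; split => //.
    have := hqH.2 m c2 hc2. lia.
  - exists p, c, cs; split.
    + by move=> x /hHS /hr.
    + move=> i hi; split; [exact: csH | by case: (hcs i hi)].
    + move=> x y /hHS hx /hHS hy hcxy; apply/negP => hxy; exact: (hp x y hx hy hxy hcxy).
    + move=> i hi.
      pose T := cs i |: [set nb (val i') i | i' in [set i' : 'I_p | val i' != i]].
      apply: (leq_trans (subset_leq_card (_ : _ \subset T))).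
        apply/subsetP => x; rewrite inE => /andP [hx /eqP hcx].
        move: hx; rewrite inE => /existsP [i' /orP [/eqP hxe | /existsP [j /andP [hj /eqP hxe]]]].
          have [_ hc1] := hcs i' (ltn_ord i').
          rewrite /T !inE; apply/orP; left; apply/eqP; rewrite hxe.
          by move: hc1; rewrite -hxe hcx => ->.
        have [_ _ hc1] := hnbr i' j (ltn_ord i') (ltn_ord j) (fun h => (negP hj) (introT eqP h)).
        have hji : val j = i by rewrite -hcx hxe hc1.
        rewrite /T !inE; apply/orP; right; apply/imsetP; exists i'.
          rewrite inE; by rewrite -hji eq_sym.
        rewrite hxe; congr nb; done.
      rewrite /T; apply: (leq_trans (leq_card_setU _ _)); rewrite cards1.
      apply: (leq_trans (leq_add (leqnn 1) (leq_imset_card _ _))).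
      have -> : [set i' : 'I_p | val i' != i] = [set~ Ordinal hi].
        apply/setP => z; rewrite !inE; done.
      rewrite cardsC1 card_ord; lia.
    + move=> i j hi hj hij.
      have [h1 h2 h3] := hnbr i j hi hj (fun h => hij (esym h)).
      exists (nb i j); [exact: (nbH i j hi hj (fun h => hij (esym h))) | by split].
have [n [[S [hcard hS]] hmin]] := @ex_min_nat
  (fun n => exists S : {set V}, #|S| = n /\ unbounded_b_atom e k S) #|H| (ex_intro _ H (conj erefl hH)).
exists S; split => // S2 hprop hS2u.
have := hmin #|S2| (ex_intro _ S2 (conj erefl hS2u)).
have := proper_card hprop. lia.
Qed.
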